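(* An input sequence $\bar{\mathbf{u}} = (\mathbf{u}_0,\ldots,\mathbf{u}_N) \in \bar{U}$ is a separating input (i.e. $Y_N^{[i]}(\bar{\mathbf{u}}) \cap Y_N^{[j]}(\bar{\mathbf{u}}) = \emptyset$ for every $i,j \in \mathbb{I}$, $i\neq j$) if and only if \[ \begin{bmatrix} \mathbf{N}(i,j) \\ \boldsymbol{\Omega}(i,j) \end{bmatrix} \bar{\mathbf{u}} \notin \mathcal{Y}(i,j) = \left\{ \begin{bmatrix} \mathbf{G}^Y_N(i,j) \\ \mathbf{A}^Y_N(i,j) \end{bmatrix} , \begin{bmatrix} \mathbf{c}^Y_N(i,j) \\ - \mathbf{b}^Y_N(i,j) \end{bmatrix} \right\} \] (a zonotope in generator–center form) for all $i,j \in \mathbb{I}$, $i \neq j$, where $\mathbf{N}(i,j) = \mathbf{F}^{[j]} \bar{\mathbf{H}}^{[j]} - \mathbf{F}^{[i]} \bar{\mathbf{H}}^{[i]} + [\mathbf{0} \;\; (\mathbf{D}^{[j]}-\mathbf{D}^{[i]})]$, $\boldsymbol{\Omega}(i,j) = [(\boldsymbol{\Omega}_N^{[i]})^T \; \mathbf{0} \; (\boldsymbol{\Omega}_N^{[j]})^T \; \mathbf{0}]^T$, and $\mathbf{G}^Y_N(i,j) = [ \mathbf{G}^{Y[i]}_N \;\; -\mathbf{G}^{Y[j]}_N ]$, $\mathbf{c}^Y_N(i,j) = \mathbf{c}^{Y[i]}_N(\bar{\mathbf{0}}) - \mathbf{c}^{Y[j]}_N(\bar{\mathbf{0}})$, $\mathbf{A}^Y_N(i,j)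 = \mathrm{blkdiag}(\mathbf{A}_N^{Y[i]}, \mathbf{A}_N^{Y[j]})$, $\mathbf{b}^Y_N(i,j) = [(\mathbf{b}_N^{Y[i]}(\bar{\mathbf{0}}))^T \;\; (\mathbf{b}_N^{Y[j]}(\bar{\mathbf{0}}))^T]^T$, with $\bar{\mathbf{0}}$ the zero input sequence.
   Context: Constrained zonotope notation: $\{\mathbf{G},\mathbf{c},\mathbf{A},\mathbf{b}\} = \{\mathbf{c}+\mathbf{G}\boldsymbol{\xi} : \|\boldsymbol{\xi}\|_\infty\le1,\ \mathbf{A}\boldsymbol{\xi}=\mathbf{b}\}$; a zonotope is $\{\mathbf{G},\mathbf{c}\}$. Consider $n_m$ linear descriptor models $i \in \mathbb{I} = \{1,\ldots,n_m\}$: $\mathbf{E}^{[i]}\mathbf{x}_k = \mathbf{A}^{[i]}\mathbf{x}_{k-1} + \mathbf{B}^{[i]}\mathbf{u}_{k-1} + \mathbf{B}_w^{[i]}\mathbf{w}_{k-1}$, $\mathbf{y}_k = \mathbf{C}^{[i]}\mathbf{x}_k + \mathbf{D}^{[i]}\mathbf{u}_k + \mathbf{D}_v^{[i]}\mathbf{v}_k$, with $\mathbf{x}_0 \in X_0$, $\mathbf{w}_k \in W$, $\mathbf{v}_k \in V = \{\mathbf{G}_v,\mathbf{c}_v,\mathbf{A}_v,\mathbf{b}_v\}$, $\mathbf{u}_k \in U$, $\bar{U} = U\times\cdots\times U$. For each $i$, with SVD $\mathbf{E}^{[i]} = \mathbf{U}^{[i]}\boldsymbol{\Sigma}^{[i]}(\mathbf{V}^{[i]})^T$,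 $\boldsymbol{\Sigma}^{[i]} = \mathrm{blkdiag}(\tilde{\boldsymbol{\Sigma}}^{[i]},\mathbf{0})$, $\mathbf{T}^{[i]} = ((\mathbf{V}^{[i]})^T)^{-1}$, define $[\tilde{\mathbf{A}}^{[i]};\check{\mathbf{A}}^{[i]}] = \mathrm{blkdiag}((\tilde{\boldsymbol{\Sigma}}^{[i]})^{-1},\mathbf{I})(\mathbf{U}^{[i]})^{-1}\mathbf{A}^{[i]}\mathbf{T}^{[i]}$, and analogously $\tilde{\mathbf{B}}^{[i]},\check{\mathbf{B}}^{[i]}$ from $\mathbf{B}^{[i]}$ and $\tilde{\mathbf{B}}_w^{[i]},\check{\mathbf{B}}_w^{[i]}$ from $\mathbf{B}_w^{[i]}$ (without right-multiplying by $\mathbf{T}^{[i]}$). With $\mathbf{z}_k = (\tilde{\mathbf{z}}_k,\check{\mathbf{z}}_k) = ((\mathbf{T}^{[i]})^{-1}\mathbf{x}_k,\mathbf{w}_k)$, the models become $\tilde{\mathbf{z}}_k = \tilde{\mathbf{A}}_z^{[i]}\mathbf{z}_{k-1} + \tilde{\mathbf{B}}^{[i]}\mathbf{u}_{k-1}$, $\mathbf{0} = \check{\mathbf{A}}_z^{[i]}\mathbf{z}_k + \check{\mathbf{B}}^{[i]}\mathbf{u}_k$, $\mathbf{y}_k = \mathbf{F}^{[i]}\mathbf{z}_k + \mathbf{D}^{[i]}\mathbf{u}_k + \mathbf{D}_v^{[i]}\mathbf{v}_k$, where $\tilde{\mathbf{A}}_z^{[i]} = [\tilde{\mathbf{A}}^{[i]}\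 \tilde{\mathbf{B}}_w^{[i]}]$, $\check{\mathbf{A}}_z^{[i]} = [\check{\mathbf{A}}^{[i]}\ \check{\mathbf{B}}_w^{[i]}]$, $\mathbf{F}^{[i]} = \mathbf{C}^{[i]}\mathbf{T}^{[i]}[\mathbf{I}_n\ \mathbf{0}]$. A known constrained zonotope $X_a$ satisfies $\mathbf{x}_k\in X_a$ for all $k$; $Z_a^{[i]} = (\mathbf{T}^{[i]})^{-1}X_a\times W = \{\mathbf{G}_a^{[i]},\mathbf{c}_a^{[i]},\mathbf{A}_a^{[i]},\mathbf{b}_a^{[i]}\}$ with $\check{\mathbf{c}}_a^{[i]},\check{\mathbf{G}}_a^{[i]}$ the rows corresponding to $\check{\mathbf{z}}$; $\{\mathbf{G}_z^{[i]},\mathbf{c}_z^{[i]},\mathbf{A}_z^{[i]},\mathbf{b}_z^{[i]}\} = (\mathbf{T}^{[i]})^{-1}X_0\times W$. The state reachable set is $Z_N^{[i]}(\bar{\mathbf{u}}) = \{\mathbf{G}_N^{[i]},\mathbf{c}_N^{[i]}(\bar{\mathbf{u}}),\mathbf{A}_N^{[i]},\mathbf{b}_N^{[i]}(\bar{\mathbf{u}})\}$ given by the recursion, for $k=1,\ldots,N$: $\mathbf{c}_k^{[i]} = [\tilde{\mathbf{A}}_z^{[i]}\mathbf{c}_{k-1}^{[i]} + \tilde{\mathbf{B}}^{[i]}\mathbf{u}_{k-1};\ \check{\mathbf{c}}_a^{[i]}]$, $\mathbf{G}_k^{[i]} = \begin{bmatrix}\tilde{\mathbf{A}}_z^{[i]}\mathbf{G}_{k-1}^{[i]}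 & \mathbf{0}\\ \mathbf{0} & \check{\mathbf{G}}_a^{[i]}\end{bmatrix}$, $\mathbf{A}_k^{[i]} = \begin{bmatrix}\mathrm{blkdiag}(\mathbf{A}_{k-1}^{[i]},\mathbf{A}_a^{[i]}) \\ \check{\mathbf{A}}_z^{[i]}\mathbf{G}_k^{[i]}\end{bmatrix}$, $\mathbf{b}_k^{[i]} = [\mathbf{b}_{k-1}^{[i]};\ \mathbf{b}_a^{[i]};\ -\check{\mathbf{A}}_z^{[i]}\mathbf{c}_k^{[i]} - \check{\mathbf{B}}^{[i]}\mathbf{u}_k]$, initialized with $\mathbf{G}_0^{[i]} = \mathbf{G}_z^{[i]}$, $\mathbf{c}_0^{[i]} = \mathbf{c}_z^{[i]}$, $\mathbf{A}_0^{[i]} = [\mathbf{A}_z^{[i]};\ \check{\mathbf{A}}_z^{[i]}\mathbf{G}_0^{[i]}]$, $\mathbf{b}_0^{[i]} = [\mathbf{b}_z^{[i]};\ -\check{\mathbf{A}}_z^{[i]}\mathbf{c}_0^{[i]} - \check{\mathbf{B}}^{[i]}\mathbf{u}_0]$. These are affine in $\bar{\mathbf{u}}$: $\mathbf{c}_N^{[i]}(\bar{\mathbf{u}}) = \mathbf{c}_N^{[i]}(\bar{\mathbf{0}}) + \mathbf{H}_N^{[i]}\bar{\mathbf{u}}$ and $\mathbf{b}_N^{[i]}(\bar{\mathbf{u}}) = \mathbf{b}_N^{[i]}(\bar{\mathbf{0}}) + \boldsymbol{\Omega}_N^{[i]}\bar{\mathbf{u}}$, where $\mathbf{H}_h^{[i]}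 = [\ \cdots\ \mathbf{M}^{h-m}[\tilde{\mathbf{B}}^{[i]};\mathbf{0}]\ \cdots\ \mathbf{0}\ \cdots]$ ($m=1,\ldots,h$, followed by $N-h+1$ zero blocks), $\mathbf{M} = [\tilde{\mathbf{A}}_z^{[i]};\mathbf{0}]$, $\mathbf{H}_0^{[i]} = \mathbf{0}$, $\bar{\mathbf{H}}^{[i]} = [(\mathbf{H}_0^{[i]})^T\ \cdots\ (\mathbf{H}_N^{[i]})^T]^T$, $\boldsymbol{\Omega}_N^{[i]} = \boldsymbol{\Gamma}_N^{[i]} + \boldsymbol{\Upsilon}_N^{[i]}\bar{\mathbf{H}}^{[i]}$, $\boldsymbol{\Upsilon}_N^{[i]} = \mathrm{blkdiag}([\mathbf{0};-\check{\mathbf{A}}_z^{[i]}],\ldots)$, $\boldsymbol{\Gamma}_N^{[i]} = \mathrm{blkdiag}([\mathbf{0};-\check{\mathbf{B}}^{[i]}],\ldots)$ ($N+1$ blocks each). The output reachable set is $Y_N^{[i]}(\bar{\mathbf{u}}) = \mathbf{F}^{[i]}Z_N^{[i]}(\bar{\mathbf{u}}) \oplus \mathbf{D}^{[i]}\mathbf{u}_N \oplus \mathbf{D}_v^{[i]}V = \{\mathbf{G}_N^{Y[i]},\mathbf{c}_N^{Y[i]}(\bar{\mathbf{u}}),\mathbf{A}_N^{Y[i]},\mathbf{b}_N^{Y[i]}(\bar{\mathbf{u}})\}$ with $\mathbf{c}_N^{Y[i]} = \mathbf{F}^{[i]}\mathbf{c}_N^{[i]}(\bar{\mathbf{u}})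 + \mathbf{D}^{[i]}\mathbf{u}_N + \mathbf{D}_v^{[i]}\mathbf{c}_v$, $\mathbf{G}_N^{Y[i]} = [\mathbf{F}^{[i]}\mathbf{G}_N^{[i]}\ \mathbf{G}_v]$, $\mathbf{A}_N^{Y[i]} = \mathrm{blkdiag}(\mathbf{A}_N^{[i]},\mathbf{A}_v)$, $\mathbf{b}_N^{Y[i]} = [\mathbf{b}_N^{[i]}(\bar{\mathbf{u}});\ \mathbf{b}_v]$. In $\mathbf{N}(i,j)$ the block $[\mathbf{0}\ (\mathbf{D}^{[j]}-\mathbf{D}^{[i]})]$ acts on the last input $\mathbf{u}_N$; the zero blocks in $\boldsymbol{\Omega}(i,j)$ correspond to the $\mathbf{b}_v$ rows. *)

(* Defs.v *)
(* Constrained-zonotope reachable sets of linear descriptor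
   models, in the transformed (SVD) coordinates of the paper. *)
From HB Require Import structures.
From mathcomp Require Import all_boot all_order all_algebra.
Set Implicit Arguments. Unset Strict Implicit. Unset Printing Implicit Defensive.
Import Order.TTheory GRing.Theory Num.Theory.
Local Open Scope ring_scope.

Definition in_czono (R : realFieldType) (n g m : nat)
  (G : 'M[R]_(n, g)) (c : 'cV[R]_n) (A : 'M[R]_(m, g)) (b : 'cV[R]_m)
  (x : 'cV[R]_n) : Prop :=
  exists xi : 'cV[R]_g,
    (forall j : 'I_g, `|xi j 0| <= 1) /\ A *m xi = b /\ x = c + G *m xi.

Definition in_zono (R : realFieldType) (n g : nat)
  (G : 'M[R]_(n, g)) (c : 'cV[R]_n) (x : 'cV[R]_n) : Prop :=
  exists xi : 'cV[R]_g, (forall j : 'I_g, `|xi j 0| <= 1) /\ x = c + G *m xi.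

Definition uk (R : realFieldType) (N nu : nat) (ubar : 'cV[R]_(N.+1 * nu))
  (k : nat) : 'cV[R]_nu :=
  \col_(l < nu) ubar (mxvec_index (inord k : 'I_N.+1) l) 0.

(* block row matrix [B_0 B_1 ... B_N], each block of width nu *)
Definition blockrow (R : realFieldType) (N m nu : nat)
  (B : 'I_N.+1 -> 'M[R]_(m, nu)) : 'M[R]_(m, N.+1 * nu) :=
  \matrix_(a < m) mxvec (\matrix_(k < N.+1, l < nu) B k a l).

(* ---------- a model i, in transformed coordinates ----------
   z = (z~, z^) with z~ of size rk (dynamic part) and z^ of size qk.
   Atz = A~_z, Acz = A^_z (pa algebraic equations), Bt = B~, Bc = B^,
   Fm = F, Dm = D, Dvm = D_v,
   (Gz, cz, Az, bz) = (T^-1) X_0 x W,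
   (Gca, cca) = rows of G_a, c_a corresponding to z^, (Aa, ba) = A_a, b_a. *)
Record model (R : realFieldType) (nu nv ny : nat) := Model {
  rk : nat; qk : nat; pa : nat; g0 : nat; m0 : nat; ga : nat; ma : nat;
  Atz : 'M[R]_(rk, rk + qk); Acz : 'M[R]_(pa, rk + qk);
  Bt : 'M[R]_(rk, nu); Bc : 'M[R]_(pa, nu);
  Fm : 'M[R]_(ny, rk + qk); Dm : 'M[R]_(ny, nu); Dvm : 'M[R]_(ny, nv);
  Gz : 'M[R]_(rk + qk, g0); cz : 'cV[R]_(rk + qk);
  Az : 'M[R]_(m0, g0); bz : 'cV[R]_m0;
  Gca : 'M[R]_(qk, ga); cca : 'cV[R]_qk;
  Aa : 'M[R]_(ma, ga); ba : 'cV[R]_ma }.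

Section Reach.
Variables (R : realFieldType) (nu nv ny : nat) (M : model R nu nv ny).

Definition rz := (rk M + qk M)%N.

Fixpoint gen (k : nat) : nat :=
  if k is k'.+1 then (gen k' + ga M)%N else g0 M.
Fixpoint con (k : nat) : nat :=
  if k is k'.+1 then (con k' + ma M + pa M)%N else (m0 M + pa M)%N.

Fixpoint Gk (k : nat) : 'M[R]_(rz, gen k) :=
  match k with
  | 0 => Gz M
  | k'.+1 => block_mx (Atz M *m Gk k') 0 0 (Gca M)
  end.

Fixpoint Ak (k : nat) : 'M[R]_(con k, gen k) :=
  match k with
  | 0 => col_mx (Az M) (Acz M *m Gz M)
  | k'.+1 => col_mx (block_mx (Ak k') 0 0 (Aa M)) (Acz M *m Gk k'.+1)
  end.

Fixpoint ck (u : nat -> 'cV[R]_nu) (k : nat) : 'cV[R]_rz :=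
  match k with
  | 0 => cz M
  | k'.+1 => col_mx (Atz M *m ck u k' + Bt M *m u k') (cca M)
  end.

Fixpoint bk (u : nat -> 'cV[R]_nu) (k : nat) : 'cV[R]_(con k) :=
  match k with
  | 0 => col_mx (bz M) (- (Acz M *m cz M) - Bc M *m u 0%N)
  | k'.+1 => col_mx (col_mx (bk u k') (ba M))
                    (- (Acz M *m ck u k'.+1) - Bc M *m u k'.+1)
  end.

Definition Mmat : 'M[R]_rz := col_mx (Atz M) 0.
Definition Bt0 : 'M[R]_(rz, nu) := col_mx (Bt M) 0.

Definition Hh (N h : nat) : 'M[R]_(rz, N.+1 * nu) :=
  blockrow (fun k : 'I_N.+1 =>
    if (k < h)%N then Mmat ^+ (h - 1 - k) *m Bt0 else 0).

Definition Esel (N k : nat) : 'M[R]_(nu, N.+1 * nu) :=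
  blockrow (fun j : 'I_N.+1 => if (j == k :> nat) then 1%:M else 0).

(* Omega_k = Gamma_k + Upsilon_k Hbar, built block-row by block-row:
   its row blocks are [0; -A^_z H_k' - B^ E_k'] (k' = 0..k), the zero parts
   facing b_z resp. b_a. *)
Fixpoint Omk (N k : nat) : 'M[R]_(con k, N.+1 * nu) :=
  match k with
  | 0 => col_mx 0 (- (Acz M *m Hh N 0) - Bc M *m Esel N 0)
  | k'.+1 => col_mx (col_mx (Omk N k') 0)
                    (- (Acz M *m Hh N k'.+1) - Bc M *m Esel N k'.+1)
  end.

Variables (gv mv : nat) (Gv : 'M[R]_(nv, gv)) (cv : 'cV[R]_nv)
          (Av : 'M[R]_(mv, gv)) (bv : 'cV[R]_mv).

Definition GY (N : nat) : 'M[R]_(ny, gen N + gv) :=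
  row_mx (Fm M *m Gk N) (Dvm M *m Gv).
Definition cY (N : nat) (ubar : 'cV[R]_(N.+1 * nu)) : 'cV[R]_ny :=
  Fm M *m ck (uk ubar) N + Dm M *m uk ubar N + Dvm M *m cv.
Definition AY (N : nat) : 'M[R]_(con N + mv, gen N + gv) :=
  block_mx (Ak N) 0 0 Av.
Definition bY (N : nat) (ubar : 'cV[R]_(N.+1 * nu)) : 'cV[R]_(con N + mv) :=
  col_mx (bk (uk ubar) N) bv.

Definition inY (N : nat) (ubar : 'cV[R]_(N.+1 * nu)) (y : 'cV[R]_ny) : Prop :=
  in_czono (GY N) (cY ubar) (AY N) (bY ubar) y.

End Reach.

Section Pair.
Variables (R : realFieldType) (nu nv ny : nat) (Mi Mj : model R nu nv ny)
  (gv mv : nat) (Gv : 'M[R]_(nv, gv)) (cv : 'cV[R]_nv)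
  (Av : 'M[R]_(mv, gv)) (bv : 'cV[R]_mv) (N : nat).

Definition Nij : 'M[R]_(ny, N.+1 * nu) :=
  Fm Mj *m Hh Mj N N - Fm Mi *m Hh Mi N N
  + blockrow (fun k : 'I_N.+1 => if (k == N :> nat) then Dm Mj - Dm Mi else 0).

Definition Omij : 'M[R]_(con Mi N + mv + (con Mj N + mv), N.+1 * nu) :=
  col_mx (col_mx (Omk Mi N N) 0) (col_mx (Omk Mj N N) 0).

Definition GYij := row_mx (GY Mi Gv N) (- GY Mj Gv N).
Definition AYij := block_mx (AY Mi Av N) 0 0 (AY Mj Av N).
Definition cYij : 'cV[R]_ny :=
  cY Mi cv (0 : 'cV[R]_(N.+1 * nu)) - cY Mj cv (0 : 'cV[R]_(N.+1 * nu)).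
Definition bYij := col_mx (bY Mi bv (0 : 'cV[R]_(N.+1 * nu)))
                          (bY Mj bv (0 : 'cV[R]_(N.+1 * nu))).

Definition in_Yij (ubar : 'cV[R]_(N.+1 * nu)) : Prop :=
  in_zono (col_mx GYij AYij) (col_mx cYij (- bYij)) (col_mx Nij Omij *m ubar).

End Pair.

Definition separating (R : realFieldType) (nu nv ny nm : nat)
  (Ms : 'I_nm -> model R nu nv ny) (gv mv : nat) (Gv : 'M[R]_(nv, gv))
  (cv : 'cV[R]_nv) (Av : 'M[R]_(mv, gv)) (bv : 'cV[R]_mv) (N : nat)
  (ubar : 'cV[R]_(N.+1 * nu)) : Prop :=
  forall i j : 'I_nm, i != j ->
    forall y : 'cV[R]_ny, ~ (inY (Ms i) Gv cv Av bv ubar y /\ inY (Ms j) Gv cv Av bv ubar y).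

(* Main.v *)
Require Import Defs.
From HB Require Import structures.
From mathcomp Require Import all_boot all_order all_algebra.
From mathcomp Require Import ring lra.
Import Order.TTheory GRing.Theory Num.Theory.
Local Open Scope ring_scope.

Lemma blockrow_mul (R : realFieldType) (N m nu : nat) (B : 'I_N.+1 -> 'M[R]_(m, nu))
  (ubar : 'cV[R]_(N.+1 * nu)) :
  blockrow B *m ubar = \sum_(k < N.+1) B k *m uk ubar k.
Proof.
apply/matrixP=> a j; rewrite !mxE summxE.
rewrite (reindex _ (curry_mxvec_bij _ _)) /=.
rewrite (eq_bigr (fun p : 'I_N.+1 * 'I_nu => blockrow B a (mxvec_index p.1 p.2) * ubar (mxvec_index p.1 p.2) j)); last by case.
rewrite -(pair_bigA _ (fun k l => blockrow B a (mxvec_index k l) * ubar (mxvec_index k l) j)).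
apply: eq_bigr => k _; rewrite mxE; apply: eq_bigr => l _.
by rewrite !mxE mxvecE !mxE inord_val (ord1 j).
Qed.

Lemma blockrow_sel (R : realFieldType) (N m nu : nat) (D : 'M[R]_(m, nu)) K
  (ubar : 'cV[R]_(N.+1 * nu)) : (K <= N)%N ->
  blockrow (fun k : 'I_N.+1 => if (k == K :> nat) then D else 0) *m ubar = D *m uk ubar K.
Proof.
move=> hK; rewrite blockrow_mul.
rewrite (eq_bigr (fun k : 'I_N.+1 => if (k == K :> nat) then D *m uk ubar k else 0)); last first.
  by move=> k _; case: ifP => _ //; rewrite mul0mx.
by rewrite -big_mkcond (big_ord1_eq _ (fun k : nat => D *m uk ubar k)) ltnS hK.
Qed.

Lemma uk0 (R : realFieldType) (N nu : nat) k : uk (0 : 'cV[R]_(N.+1 * nu)) k = 0.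
Proof. by apply/matrixP=> a b; rewrite !mxE. Qed.

Section S.
Variables (R : realFieldType) (nu nv ny : nat) (M : model R nu nv ny) (N : nat)
  (ubar : 'cV[R]_(N.+1 * nu)).

Lemma Hh_mul h : (h <= N.+1)%N ->
  Hh M N h *m ubar = \sum_(k < h) Mmat M ^+ (h - 1 - k) *m (Bt0 M *m uk ubar k).
Proof.
move=> hh; rewrite blockrow_mul (big_ord_widen _ (fun k => Mmat M ^+ (h - 1 - k) *m (Bt0 M *m uk ubar k)) hh).
rewrite [RHS]big_mkcond; apply: eq_bigr => k _ /=.
by case: ifP => _; rewrite ?mul0mx ?mulmxA.
Qed.

Lemma ck_lin h : (h <= N)%N ->
  ck M (uk ubar) h = ck M (uk (0 : 'cV[R]_(N.+1 * nu))) h + Hh M N h *m ubar.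
Proof.
elim: h => [|h IH] hh.
  by rewrite Hh_mul // big_ord0 addr0.
rewrite /= IH ?(ltnW hh) // Hh_mul ?(leq_trans (ltnW hh)) // Hh_mul //.
rewrite [in RHS](big_ord_recr h) /= subSS subn0 subnn expr0 mul1mx.
rewrite [in RHS](eq_bigr (fun k : 'I_h => Mmat M *m (Mmat M ^+ (h - 1 - k) *m (Bt0 M *m uk ubar k)))); last first.
  move=> k _; rewrite [RHS]mulmxA -[Mmat M *m _]/(Mmat M * _) -exprS /=; congr (_ ^+ _ *m _).
  case: k => k /= hk; rewrite -subnDA add1n subnSK //.
rewrite -(mulmx_sumr (Mmat M)) uk0 mulmx0 addr0 /Mmat /Bt0 !mul_col_mx !mul0mx add_col_mx addr0.
  by rewrite add_col_mx addr0 mulmxDr addrA.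
by rewrite ltnW.
Qed.

Lemma Esel_mul k : (k <= N)%N -> @Esel R nu N k *m ubar = uk ubar k.
Proof. by move=> hk; rewrite /Esel blockrow_sel // mul1mx. Qed.

Lemma bk_lin h : (h <= N)%N ->
  bk M (uk ubar) h = bk M (uk (0 : 'cV[R]_(N.+1 * nu))) h + Omk M N h *m ubar.
Proof.
elim: h => [|h IH] hh.
  rewrite /= mul_col_mx mul0mx add_col_mx addr0; congr col_mx.
  rewrite mulmxDl !mulNmx -!mulmxA Hh_mul // big_ord0 mulmx0 oppr0 sub0r Esel_mul // uk0 mulmx0 subr0.
  by [].
have E := @ck_lin h.+1 hh; rewrite /= in E; rewrite /= E IH ?(ltnW hh) // !mul_col_mx !mul0mx !add_col_mx !addr0; congr col_mx.
rewrite mulmxDl !mulNmx -!mulmxA Esel_mul // !uk0 !mulmx0 !addr0 subr0 mulmxDr opprD.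
by rewrite addrA.
Qed.
End S.

Lemma hsub (V : zmodType) (a x : V) : (a + x) - a = x.
Proof. by rewrite addrC addKr. Qed.

Lemma L1 (R : realFieldType) n (y ci cj ci0 cj0 gi gj : 'cV[R]_n) :
  y = ci + gi -> y = cj + gj -> (cj - cj0) - (ci - ci0) = (ci0 - cj0) + (gi - gj).
Proof.
move=> /matrixP e1 /matrixP e2; apply/matrixP => a b.
move: (e1 a b) (e2 a b); rewrite !mxE; lra.
Qed.

Lemma L2 (R : realFieldType) n (ci cj ci0 cj0 gi gj : 'cV[R]_n) :
  (cj - cj0) - (ci - ci0) = (ci0 - cj0) + (gi - gj) -> ci + gi = cj + gj.
Proof.
move=> /matrixP e1; apply/matrixP => a b.
move: (e1 a b); rewrite !mxE; lra.
Qed.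

Section P.
Variables (R : realFieldType) (nu nv ny : nat) (gv mv : nat) (Gv : 'M[R]_(nv, gv)) (cv : 'cV[R]_nv)
  (Av : 'M[R]_(mv, gv)) (bv : 'cV[R]_mv) (N : nat) (ubar : 'cV[R]_(N.+1 * nu)).

Lemma cY_lin (M : model R nu nv ny) :
  cY M cv ubar = cY M cv (0 : 'cV[R]_(N.+1 * nu)) + (Fm M *m (Hh M N N *m ubar) + Dm M *m uk ubar N).
Proof.
rewrite /cY ck_lin // uk0 mulmx0 addr0 mulmxDr.
set a := Fm M *m _; set b := Fm M *m _; set c := Dm M *m _; set d := Dvm M *m _.
by rewrite -!addrA; congr (_ + _); rewrite [RHS]addrC -addrA.
Qed.

Lemma bY_lin (M : model R nu nv ny) :
  bY M bv ubar = bY M bv (0 : 'cV[R]_(N.+1 * nu)) + col_mx (Omk M N N *m ubar) 0.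
Proof. by rewrite /bY bk_lin // add_col_mx addr0. Qed.

Lemma Nij_mul (Mi Mj : model R nu nv ny) :
  Nij Mi Mj N *m ubar = (cY Mj cv ubar - cY Mj cv (0 : 'cV[R]_(N.+1 * nu))) - (cY Mi cv ubar - cY Mi cv (0 : 'cV[R]_(N.+1 * nu))).
Proof.
rewrite /Nij !mulmxDl mulNmx blockrow_sel // mulmxBl !cY_lin !hsub -!mulmxA.
set a := Fm Mj *m _; set b := Fm Mi *m _; set c := Dm Mj *m _; set d := Dm Mi *m _.
rewrite opprD !addrA; congr (_ + _); rewrite -!addrA; congr (_ + _); by rewrite addrC.
Qed.

Lemma Omij_mul (Mi Mj : model R nu nv ny) :
  Omij Mi Mj mv N *m ubar =
  col_mx (col_mx (Omk Mi N N *m ubar) 0) (col_mx (Omk Mj N N *m ubar) 0).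
Proof. by rewrite /Omij !mul_col_mx !mul0mx. Qed.

Lemma pair_equiv (Mi Mj : model R nu nv ny) :
  (exists y, inY Mi Gv cv Av bv ubar y /\ inY Mj Gv cv Av bv ubar y) <->
  in_Yij Mi Mj Gv cv Av bv ubar.
Proof.
split.
  case=> y [[x1 [b1 [a1 e1]]] [x2 [b2 [a2 e2]]]].
  exists (col_mx x1 x2); split.
    move=> k; rewrite -(splitK k); case: (split k) => k' /=.
      by rewrite col_mxEu.
    by rewrite col_mxEd.
  rewrite /GYij /AYij /cYij /bYij !mul_col_mx !mul_row_col !mul0mx mulNmx.
  rewrite Nij_mul opp_col_mx !add_col_mx !addr0 !add0r.
  congr col_mx; first exact: L1 e1 e2.
  by rewrite a1 a2 !bY_lin !addKr.
case=> xi [bx ex].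
rewrite -(vsubmxK xi) in bx ex.
move: bx ex; set x1 := usubmx xi; set x2 := dsubmx xi => bx ex.
move: ex; rewrite /GYij /AYij /cYij /bYij !mul_col_mx !mul_row_col !mul0mx mulNmx.
rewrite Nij_mul opp_col_mx !add_col_mx !addr0 !add0r.
case/eq_col_mx => ex1 /eq_col_mx [h1 h2].
exists (cY Mi cv ubar + GY Mi Gv N *m x1); split.
  exists x1; split; first by move=> k; have := bx (lshift _ k); rewrite col_mxEu.
  by split => //; rewrite bY_lin h1 addNKr.
exists x2; split; first by move=> k; have := bx (rshift _ k); rewrite col_mxEd.
split; first by rewrite bY_lin h2 addNKr.
by move/L2: ex1.
Qed.
End P.

Theorem theorem1 (R : realFieldType) (nu nv ny nm N : nat)
  (Ms : 'I_nm -> model R nu nv ny)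
  (gv mv : nat) (Gv : 'M[R]_(nv, gv)) (cv : 'cV[R]_nv)
  (Av : 'M[R]_(mv, gv)) (bv : 'cV[R]_mv)
  (Uset : 'cV[R]_nu -> Prop)
  (ubar : 'cV[R]_(N.+1 * nu))
  (Hu : forall k : 'I_N.+1, Uset (uk ubar k)) :
  separating Ms Gv cv Av bv ubar <->
  (forall i j : 'I_nm, i != j ->
     ~ in_Yij (Ms i) (Ms j) Gv cv Av bv ubar).
Proof.
split.
  move=> hs i j hij /pair_equiv [y hy].
  exact: (hs i j hij y hy).
move=> h i j hij y hy.
apply: (h i j hij); apply/pair_equiv; by exists y.
Qed.
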